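(* Let $d>k\geq1$, $\varepsilon\in(0,1)$, $A\succeq0$ symmetric with $\lambda_k>\lambda_{k+1}$, $\beta>0$ with $\lambda_k>2\sqrt\beta\geq\lambda_{k+1}$, $X_0\in\mathrm{St}(d,k)$ with $\cos\theta_k(U_k,X_0)>0$, and ANPM perturbations satisfying for all $t\geq0$: $\|U_{-k}^\top\Xi_t\|_2\leq c(\lambda_k-2\sqrt\beta)\varepsilon$ and $\|U_k^\top\Xi_t\|_2\leq c(\lambda_k-2\sqrt\beta)\cos\theta_k(U_k,X_t)$, $c=1/32$. Then for all $t\geq1$ and all $s\in\{0,\dots,t-1\}$, $$\|C_t^{-1}\|_2\leq\frac{c_1}{((1-c)\lambda_k^++c\sqrt\beta)^t},\quad \|C_{t-1-s}C_t^{-1}\|_2\leq\frac{c_1}{((1-c)\lambda_k^++c\sqrt\beta)^{s+1}},$$ $$\|p_t(\Lambda_{-k})\|_2\leq\sqrt\beta^{\,t},\quad \|q_t(\Lambda_{-k})\|_2\leq(t+1)\sqrt\beta^{\,t},$$ where $c_1:=31/15$ and $\lambda_k^+:=\frac{\lambda_k+\sqrt{\lambda_k^2-4\beta}}{2}$.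
   Context: $A$ has eigenvalues $\lambda_1\geq\dots\geq\lambda_d\geq0$, orthonormal eigenvectors $u_i$; $U_k:=[u_1..u_k]$, $U_{-k}:=[u_{k+1}..u_d]$, $\Lambda_k:=\mathrm{diag}(\lambda_1..\lambda_k)$, $\Lambda_{-k}:=\mathrm{diag}(\lambda_{k+1}..\lambda_d)$. QR: $Y=XR$, $X^\top X=I_k$, $R$ upper triangular, nonnegative diagonal; $\theta_k(U,X):=\arccos\sigma_{\min}(U^\top X)$. ANPM: $(X_1,R_1)=\mathrm{QR}(\tfrac12AX_0+\Xi_0)$; for $t\geq1$, $Y_{t+1}=AX_t-\beta X_{t-1}R_t^{-1}+\Xi_t$, $(X_{t+1},R_{t+1})=\mathrm{QR}(Y_{t+1})$. $E_t:=\Lambda_k^{-1}(U_k^\top\Xi_t)(U_k^\top X_t)^{-1}$; $G_0:=(I_k/2+E_0)^{-1}$, $G_{t+1}:=(I_k-\beta\Lambda_k^{-1}G_t\Lambda_k^{-1}+E_{t+1})^{-1}$; $C_0:=I_k$, $C_t:=\Lambda_kG_{t-1}^{-1}\Lambda_kG_{t-2}^{-1}\cdots\Lambda_kG_0^{-1}$. Polynomials: $p_0=1$, $p_1(x)=x/2$, $p_{t+1}=xp_t-\beta p_{t-1}$; $q_0=1$, $q_1(x)=x$, $q_{t+1}=xq_t-\beta q_{t-1}$. *)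

(* Defs.v *)
From HB Require Import structures.
From mathcomp Require Import all_boot all_order all_algebra.
From mathcomp Require Import classical_sets reals.
Set Implicit Arguments. Unset Strict Implicit. Unset Printing Implicit Defensive.
Import Order.TTheory GRing.Theory Num.Theory.
Local Open Scope ring_scope.
Local Open Scope classical_set_scope.

Section Defs.
Variable R : realType.

Definition vnorm n (x : 'cV[R]_n) : R := Num.sqrt (\sum_i (x i 0) ^+ 2).

Definition specnorm m n (M : 'M[R]_(m, n)) : R :=
  sup [set vnorm (M *m x) | x in [set x : 'cV[R]_n | vnorm x = 1]].

Definition sigma_min n (M : 'M[R]_n) : R :=
  inf [set vnorm (M *m x) | x in [set x : 'cV[R]_n | vnorm x = 1]].

Definition cos_theta d k (U X : 'M[R]_(d, k)) : R := sigma_min (U^T *m X).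

Definition isQR d k (Y X : 'M[R]_(d, k)) (Rm : 'M[R]_k) : Prop :=
  [/\ X^T *m X = 1%:M,
      (forall i j : 'I_k, (j < i)%N -> Rm i j = 0),
      (forall i : 'I_k, 0 <= Rm i i) & Y = X *m Rm].

(* three-term recursion  r_0 = 1, r_1 = a, r_{t+1} = X r_t - beta r_{t-1} *)
Fixpoint cheb_pair (beta : R) (a : {poly R}) (t : nat) : {poly R} * {poly R} :=
  match t with
  | 0 => (1, a)
  | t'.+1 => let: (u, v) := cheb_pair beta a t' in (v, 'X * v - beta%:P * u)
  end.

Definition p_poly (beta : R) (t : nat) : {poly R} :=
  (cheb_pair beta ((2%:R)^-1 *: 'X) t).1.
Definition q_poly (beta : R) (t : nat) : {poly R} :=
  (cheb_pair beta 'X t).1.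

Definition poly_diag n (P : {poly R}) (lam : 'I_n -> R) : 'M[R]_n :=
  diag_mx (\row_i P.[lam i]).

Definition E_mat d k (Lk : 'M[R]_k) (Uk : 'M[R]_(d, k))
  (Xi X : nat -> 'M[R]_(d, k)) (t : nat) : 'M[R]_k :=
  invmx Lk *m (Uk^T *m Xi t) *m invmx (Uk^T *m X t).

Fixpoint G_mat d k (beta : R) (Lk : 'M[R]_k) (Uk : 'M[R]_(d, k))
  (Xi X : nat -> 'M[R]_(d, k)) (t : nat) : 'M[R]_k :=
  match t with
  | 0 => invmx ((2%:R)^-1 *: 1%:M + E_mat Lk Uk Xi X 0)
  | t'.+1 => invmx (1%:M - beta *: (invmx Lk *m G_mat beta Lk Uk Xi X t' *m invmx Lk)
                    + E_mat Lk Uk Xi X t'.+1)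
  end.

Fixpoint C_mat d k (beta : R) (Lk : 'M[R]_k) (Uk : 'M[R]_(d, k))
  (Xi X : nat -> 'M[R]_(d, k)) (t : nat) : 'M[R]_k :=
  match t with
  | 0 => 1%:M
  | t'.+1 => Lk *m invmx (G_mat beta Lk Uk Xi X t') *m C_mat beta Lk Uk Xi X t'
  end.

End Defs.

(* Main.v *)
Require Import Defs.
From HB Require Import structures.
From mathcomp Require Import all_boot all_order all_algebra.
From mathcomp Require Import classical_sets reals.
From mathcomp Require Import ring lra.
Import Order.TTheory GRing.Theory Num.Theory.
Local Open Scope ring_scope.
Local Open Scope classical_set_scope.
Set Warnings "-notation-overridden -ambiguous-paths".
Set Implicit Arguments. Unset Strict Implicit. Unset Printing Implicit Defensive.

Section Norms.
Variable R : realType.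

Definition ss n (x : 'cV[R]_n) : R := \sum_i (x i 0) ^+ 2.
Definition dt n (x y : 'cV[R]_n) : R := \sum_i (x i 0) * (y i 0).

Lemma ss_ge0 n (x : 'cV[R]_n) : 0 <= ss x.
Proof. by apply: sumr_ge0 => i _; rewrite sqr_ge0. Qed.

Lemma vnormE n (x : 'cV[R]_n) : vnorm x = Num.sqrt (ss x).
Proof. by []. Qed.

Lemma vnorm_ge0 n (x : 'cV[R]_n) : 0 <= vnorm x.
Proof. exact: sqrtr_ge0. Qed.

Lemma vnorm_sq n (x : 'cV[R]_n) : vnorm x ^+ 2 = ss x.
Proof. by rewrite /vnorm sqr_sqrtr // ss_ge0. Qed.

Lemma ss_eq0 n (x : 'cV[R]_n) : ss x = 0 -> x = 0.
Proof.
move=> h; apply/matrixP => i j; rewrite (ord1 j) mxE.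
have := @psumr_eq0P _ _ _ _ (fun i _ => sqr_ge0 (x i 0)) h i isT.
by move/eqP; rewrite sqrf_eq0 => /eqP.
Qed.

Lemma vnorm_eq0 n (x : 'cV[R]_n) : vnorm x = 0 -> x = 0.
Proof.
move=> h; apply: ss_eq0; by rewrite -vnorm_sq h expr2 mul0r.
Qed.

Lemma vnorm0 n : vnorm (0 : 'cV[R]_n) = 0.
Proof.
rewrite /vnorm /ss big1 ?sqrtr0 // => i _; by rewrite mxE expr2 mul0r.
Qed.

Lemma ssZ n a (x : 'cV[R]_n) : ss (a *: x) = a ^+ 2 * ss x.
Proof.
rewrite /ss mulr_sumr; apply: eq_bigr => i _; by rewrite mxE exprMn.
Qed.

Lemma vnormZ n a (x : 'cV[R]_n) : vnorm (a *: x) = `|a| * vnorm x.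
Proof. by rewrite !vnormE ssZ sqrtrM ?sqr_ge0 // sqrtr_sqr. Qed.

Lemma ssD n (x y : 'cV[R]_n) : ss (x + y) = ss x + 2%:R * dt x y + ss y.
Proof.
rewrite /ss /dt mulr_sumr -!big_split /=; apply: eq_bigr => i _.
rewrite mxE; ring.
Qed.

Lemma cauchy_schwarz n (x y : 'cV[R]_n) : dt x y <= vnorm x * vnorm y.
Proof.
set a := vnorm y; set b := vnorm x.
have ha : 0 <= a by apply: vnorm_ge0.
have hb : 0 <= b by apply: vnorm_ge0.
have key : 0 <= \sum_i (a * x i 0 - b * y i 0) ^+ 2.
  by apply: sumr_ge0 => i _; rewrite sqr_ge0.
have E : \sum_i (a * x i 0 - b * y i 0) ^+ 2
    = a ^+ 2 * ss x - 2%:R * a * b * dt x y + b ^+ 2 * ss y.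
  rewrite /ss /dt !mulr_sumr -sumrN -!big_split /=; apply: eq_bigr => i _; ring.
rewrite E -!vnorm_sq -/a -/b in key.
have [a0|apos] := eqVneq a 0.
  have y0 : y = 0 by apply: vnorm_eq0.
  rewrite a0 mulr0 /dt big1 // => i _; by rewrite y0 mxE mulr0.
have [b0|bpos] := eqVneq b 0.
  have x0 : x = 0 by apply: vnorm_eq0.
  rewrite b0 mul0r /dt big1 // => i _; by rewrite x0 mxE mul0r.
have hab : 0 < a * b by rewrite mulr_gt0 // lt0r ?apos ?bpos.
rewrite [vnorm x * _]mulrC -/a -/b; nra.
Qed.

Lemma vnormD n (x y : 'cV[R]_n) : vnorm (x + y) <= vnorm x + vnorm y.
Proof.
rewrite [vnorm (x + y)]vnormE -(@ler_pXn2r _ 2) ?nnegrE ?sqrtr_ge0 ?addr_ge0 ?vnorm_ge0 //.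
rewrite sqr_sqrtr ?ss_ge0 // ssD -!vnorm_sq; have := cauchy_schwarz x y; nra.
Qed.


Lemma entry_le n (x : 'cV[R]_n) j : `|x j 0| <= vnorm x.
Proof.
rewrite -sqrtr_sqr vnormE ler_wsqrtr // /ss (bigD1 j) //= lerDl.
by apply: sumr_ge0 => i _; rewrite sqr_ge0.
Qed.

Definition Kb m n (M : 'M[R]_(m, n)) : R :=
  Num.sqrt (\sum_i (\sum_j `|M i j|) ^+ 2).

Lemma mx_bound m n (M : 'M[R]_(m, n)) x : vnorm (M *m x) <= Kb M * vnorm x.
Proof.
have hx := vnorm_ge0 x.
have hi : forall i, `|(M *m x) i 0| <= (\sum_j `|M i j|) * vnorm x.
  move=> i; rewrite mxE mulr_suml; apply: le_trans (ler_norm_sum _ _ _) _.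
  apply: ler_sum => j _; rewrite normrM ler_wpM2l //; exact: entry_le.
rewrite /Kb [vnorm (M *m x)]vnormE -[vnorm x](ger0_norm hx) -sqrtr_sqr -sqrtrM ?ler_wsqrtr //; last first.
  by apply: sumr_ge0 => i _; rewrite sqr_ge0.
rewrite mulr_suml /ss; apply: ler_sum => i _.
rewrite -exprMn -real_normK ?num_real //.
rewrite ler_pXn2r ?nnegrE ?normr_ge0 ?mulr_ge0 ?sumr_ge0 //.
Qed.

Definition unitv n : 'cV[R]_n.+1 := delta_mx 0 0.

Lemma vnorm_unitv n : vnorm (unitv n) = 1.
Proof.
rewrite vnormE /ss (bigD1 0) //= big1 ?addr0 ?mxE ?eqxx ?expr1n ?sqrtr1 //.
by move=> i /negbTE hi; rewrite mxE hi expr0n.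
Qed.

Definition Sset m n (M : 'M[R]_(m, n)) :=
  [set vnorm (M *m x) | x in [set x : 'cV[R]_n | vnorm x = 1]].

Lemma Sset_n0 m n (M : 'M[R]_(m, n.+1)) : (Sset M !=set0)%classic.
Proof. exists (vnorm (M *m unitv n)); exists (unitv n) => //; exact: vnorm_unitv. Qed.

Lemma Sset_ub m n (M : 'M[R]_(m, n)) : has_ubound (Sset M).
Proof.
exists (Kb M) => _ [x /= hx <-]; by have := mx_bound M x; rewrite hx mulr1.
Qed.

Lemma Sset_lb m n (M : 'M[R]_(m, n)) : has_lbound (Sset M).
Proof. exists 0 => _ [x /= hx <-]; exact: vnorm_ge0. Qed.

Lemma sp_ge0 m n (M : 'M[R]_(m, n.+1)) : 0 <= specnorm M.
Proof.
apply: le_trans (vnorm_ge0 (M *m unitv n)) _.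
apply: (ub_le_sup (Sset_ub M)); exists (unitv n) => //; exact: vnorm_unitv.
Qed.

Lemma sp_ub m n (M : 'M[R]_(m, n.+1)) x : vnorm (M *m x) <= specnorm M * vnorm x.
Proof.
have [x0|xn0] := eqVneq (vnorm x) 0.
  by have := mx_bound M x; rewrite x0 !mulr0.
have vp : 0 < vnorm x by rewrite lt0r xn0 vnorm_ge0.
have h1 : vnorm ((vnorm x)^-1 *: x) = 1.
  by rewrite vnormZ ger0_norm ?invr_ge0 ?vnorm_ge0 // mulVf.
have := ub_le_sup (Sset_ub M) (ex_intro2 _ _ _ h1 erefl).
rewrite /= -scalemxAr vnormZ ger0_norm ?invr_ge0 ?vnorm_ge0 //.
by rewrite ler_pdivrMl // mulrC.
Qed.

Lemma sp_le m n (M : 'M[R]_(m, n.+1)) b :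
  (forall x, vnorm (M *m x) <= b * vnorm x) -> specnorm M <= b.
Proof.
move=> h; apply: ge_sup (Sset_n0 M) _ => _ [x /= hx <-].
by have := h x; rewrite hx mulr1.
Qed.

Lemma spD m n (M N : 'M[R]_(m, n.+1)) : specnorm (M + N) <= specnorm M + specnorm N.
Proof.
apply: sp_le => x; rewrite mulmxDl mulrDl.
apply: le_trans (vnormD _ _) _; exact: lerD (sp_ub _ _) (sp_ub _ _).
Qed.

Lemma spN m n (M : 'M[R]_(m, n.+1)) : specnorm (- M) <= specnorm M.
Proof.
apply: sp_le => x; rewrite mulNmx -scaleN1r vnormZ normrN normr1 mul1r.
exact: sp_ub.
Qed.

Lemma spZ m n a (M : 'M[R]_(m, n.+1)) : specnorm (a *: M) <= `|a| * specnorm M.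
Proof.
apply: sp_le => x; rewrite -scalemxAl vnormZ -mulrA ler_wpM2l //; exact: sp_ub.
Qed.

Lemma spM m n p (M : 'M[R]_(m, n.+1)) (N : 'M[R]_(n.+1, p.+1)) :
  specnorm (M *m N) <= specnorm M * specnorm N.
Proof.
apply: sp_le => x; rewrite -mulmxA -mulrA.
apply: le_trans (sp_ub _ _) _; rewrite ler_wpM2l ?sp_ge0 //; exact: sp_ub.
Qed.

Lemma sp1 n : specnorm (1%:M : 'M[R]_n.+1) <= 1.
Proof. by apply: sp_le => x; rewrite mul1mx mul1r. Qed.

Lemma vnormB n (x y : 'cV[R]_n) : vnorm x - vnorm y <= vnorm (x - y).
Proof.
rewrite lerBlDr; apply: le_trans (vnormD _ _); by rewrite subrK.
Qed.

Lemma vnormN n (x : 'cV[R]_n) : vnorm (- x) = vnorm x.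
Proof. by rewrite -scaleN1r vnormZ normrN normr1 mul1r. Qed.

Lemma lower_unit n (M : 'M[R]_n.+1) m0 :
  0 < m0 -> (forall x, m0 * vnorm x <= vnorm (M *m x)) ->
  M \in unitmx /\ specnorm (invmx M) <= m0^-1.
Proof.
move=> m0p h.
have hu : M \in unitmx.
  rewrite -unitmx_tr unitmxE unitfE; apply/negP => /det0P [v vn0 hv].
  have : M *m v^T = 0 by rewrite -[M]trmxK -trmx_mul hv trmx0.
  move=> hMv; have := h v^T; rewrite hMv vnorm0 => h2.
  have : vnorm v^T = 0.
    apply/eqP; rewrite eq_le vnorm_ge0 andbT.
    by rewrite -(pmulr_rle0 _ m0p).
  move/vnorm_eq0 => /(congr1 trmx); rewrite trmxK trmx0 => v0.
  by rewrite v0 eqxx in vn0.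
split => //; apply: sp_le => y.
have := h (invmx M *m y); rewrite mulKVmx //.
by rewrite -ler_pdivlMl // => /le_trans; apply; rewrite mulrC.
Qed.

Lemma sigma_lb n (M : 'M[R]_n.+1) x : sigma_min M * vnorm x <= vnorm (M *m x).
Proof.
have [x0|xn0] := eqVneq (vnorm x) 0.
  by rewrite x0 mulr0 vnorm_ge0.
have vp : 0 < vnorm x by rewrite lt0r xn0 vnorm_ge0.
have h1 : vnorm ((vnorm x)^-1 *: x) = 1.
  by rewrite vnormZ ger0_norm ?invr_ge0 ?vnorm_ge0 // mulVf.
have := ge_inf (Sset_lb M) (ex_intro2 _ _ _ h1 erefl).
rewrite /= -scalemxAr vnormZ ger0_norm ?invr_ge0 ?vnorm_ge0 //.
by rewrite ler_pdivlMl // mulrC.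
Qed.

Lemma sigma_ge0 n (M : 'M[R]_n.+1) : 0 <= sigma_min M.
Proof.
apply: lb_le_inf (Sset_n0 M) _ => _ [x /= hx <-]; exact: vnorm_ge0.
Qed.

End Norms.

Lemma vnormDl (R : realType) n (u w : 'cV[R]_n) : vnorm u - vnorm w <= vnorm (u + w).
Proof. by have := vnormB u (- w); rewrite vnormN opprK. Qed.

Lemma invmxM2 (R : realType) n (A B : 'M[R]_n.+1) :
  A \in unitmx -> B \in unitmx -> invmx (A *m B) = invmx B *m invmx A.
Proof.
move=> hA hB.
have hAB : A *m B \in unitmx by rewrite unitmx_mul hA hB.
have h1 : (A *m B) *m (invmx B *m invmx A) = 1%:M.
  by rewrite -mulmxA (mulmxA B) mulmxV // mul1mx mulmxV.
by rewrite -[invmx (A *m B)]mulmx1 -h1 mulKmx.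
Qed.

Section Core.
Variables (R : realType) (k d : nat) (beta lk e base rho B : R).
Variables (Lk : 'M[R]_k.+1) (Uk : 'M[R]_(d, k.+1)) (Xi X : nat -> 'M[R]_(d, k.+1)).

Definition Qs j := 1 + B * rho ^+ j.

Hypotheses (Hlk : 0 < lk) (Hbase : 0 < base) (Hbeta : 0 <= beta)
  (Hrho : rho = beta / base ^+ 2)
  (HLu : Lk \in unitmx) (HLi : specnorm (invmx Lk) <= lk^-1)
  (HE : forall t, specnorm (E_mat Lk Uk Xi X t) <= e)
  (He : e < 2%:R^-1)
  (H0 : base / (2%:R^-1 - e) <= lk * (Qs 0 / Qs 1))
  (HQ : forall j, 0 < Qs j)
  (HF1 : base + beta / base <= lk * (1 - e)).

Lemma Q_rec j : Qs j.+2 = (1 + rho) * Qs j.+1 - rho * Qs j.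
Proof. rewrite /Qs !exprS; ring. Qed.

Lemma step_scalar sG q0 q1 q2 :
  0 <= sG -> 0 < q0 -> 0 < q1 -> 0 < q2 -> q2 = (1 + rho) * q1 - rho * q0 ->
  base * sG <= lk * (q0 / q1) ->
  base * q2 / (q1 * lk) <= 1 - beta * (lk^-1 * sG * lk^-1) - e.
Proof.
move=> hsG h0 h1 h2 hq hb.
set z := q0 / q1.
have E1 : base * q2 / (q1 * lk) = (base + beta / base - beta * z / base) / lk.
  rewrite hq Hrho /z; field.
  by apply/and3P; split; apply: lt0r_neq0.
have E2 : beta * (lk^-1 * sG * lk^-1) = beta * (sG / lk) / lk.
  by rewrite !mulrA (mulrAC beta).
have h3 : sG / lk <= z / base.
  by rewrite ler_pdivrMr // mulrAC ler_pdivlMr // mulrC [z * _]mulrC.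
have h4 : beta * (sG / lk) <= beta * z / base.
  by rewrite -mulrA ler_wpM2l.
rewrite E1 E2 ler_pdivrMr //.
have -> : (1 - beta * (sG / lk) / lk - e) * lk = lk - beta * (sG / lk) - e * lk.
  by field; apply: lt0r_neq0.
move: HF1 h4; rewrite mulrBr mulr1.
lra.
Qed.

Lemma G_bound j :
  G_mat beta Lk Uk Xi X j \in unitmx /\
  base * specnorm (G_mat beta Lk Uk Xi X j) <= lk * (Qs j / Qs j.+1).
Proof.
elim: j => [|j [IHu IHb]].
  rewrite /=.
  have m0p : 0 < 2%:R^-1 - e by rewrite subr_gt0.
  have [|hu hb] := @lower_unit R k (2%:R^-1 *: 1%:M + E_mat Lk Uk Xi X 0) _ m0p.
    move=> x; rewrite mulmxDl -scalemxAl mul1mx.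
    apply: le_trans (vnormDl _ _); rewrite vnormZ ger0_norm ?invr_ge0 ?ler0n //.
    rewrite mulrBl lerB //; apply: le_trans (sp_ub _ _) _.
    by rewrite ler_wpM2r ?vnorm_ge0.
  split; first by rewrite unitmx_inv.
  apply: le_trans H0; apply: ler_wpM2l; [exact: ltW | exact: hb].
set G := G_mat beta Lk Uk Xi X j.
have hsG : 0 <= specnorm G by apply: sp_ge0.
have m0p : 0 < base * Qs j.+2 / (Qs j.+1 * lk).
  by rewrite divr_gt0 ?mulr_gt0.
have hs := step_scalar hsG (HQ j) (HQ j.+1) (HQ j.+2) (Q_rec j) IHb.
have [|hu hb] := @lower_unit R k
   (1%:M - beta *: (invmx Lk *m G *m invmx Lk) + E_mat Lk Uk Xi X j.+1) _ m0p.
  move=> x; rewrite mulmxDl mulmxBl mul1mx.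
  apply: le_trans (vnormDl _ _); apply: le_trans (lerB (vnormB _ _) (le_refl _)).
  apply: le_trans (lerB (lerB (le_refl _) (sp_ub _ _)) (sp_ub _ _)).
  have hm : base * Qs j.+2 / (Qs j.+1 * lk) * vnorm x <=
     (1 - beta * (lk^-1 * specnorm G * lk^-1) - e) * vnorm x.
    by rewrite ler_wpM2r ?vnorm_ge0.
  apply: le_trans hm _.
  rewrite !mulrBl mul1r lerB ?lerB //; last by rewrite ler_wpM2r ?vnorm_ge0.
  rewrite ler_wpM2r ?vnorm_ge0 //.
  apply: le_trans (spZ _ _) _; rewrite ger0_norm // ler_wpM2l //.
  apply: le_trans (spM _ _) _.
  have hl0 : 0 <= lk^-1 by rewrite invr_ge0; exact: ltW.
  apply: ler_pM; rewrite ?sp_ge0 //.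
  apply: le_trans (spM _ _) _; apply: ler_pM; rewrite ?sp_ge0 //.
split; first by rewrite /= unitmx_inv.
rewrite /= -/G; apply: le_trans (ler_wpM2l (ltW Hbase) hb) _.
rewrite le_eqVlt; apply/orP; left; apply/eqP.
field; rewrite !gt_eqF //.
Qed.

Lemma C_unit t : C_mat beta Lk Uk Xi X t \in unitmx.
Proof.
elim: t => [|t IH]; first by rewrite unitmx1.
rewrite /= !unitmx_mul HLu IH unitmx_inv andbT /=.
by case: (G_bound t).
Qed.

Lemma C_bound a n :
  base ^+ n * specnorm (C_mat beta Lk Uk Xi X a *m invmx (C_mat beta Lk Uk Xi X (a + n)))
  <= Qs a / Qs (a + n).
Proof.
elim: n => [|n IH].
  rewrite addn0 mulmxV ?C_unit // expr0 mul1r divff ?gt_eqF //; exact: sp1.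
rewrite addnS /=.
have [Gu Gb] := G_bound (a + n).
rewrite invmxM2 ?unitmx_mul ?HLu ?unitmx_inv ?Gu ?C_unit //.
rewrite invmxM2 ?unitmx_inv ?Gu // invmxK !mulmxA.
set P := C_mat _ _ _ _ _ a *m _.
set Gj := G_mat beta Lk Uk Xi X (a + n).
have hP0 : 0 <= specnorm P by apply: sp_ge0.
have hG0 : 0 <= specnorm Gj by apply: sp_ge0.
have hl0 : 0 <= lk^-1 by rewrite invr_ge0; exact: ltW.
have hb0 : 0 <= base by exact: ltW.
have h1 : specnorm (P *m Gj *m invmx Lk) <= specnorm P * specnorm Gj * lk^-1.
  apply: le_trans (spM _ _) _; apply: ler_pM; rewrite ?sp_ge0 ?mulr_ge0 //.
  exact: spM.
have h2 : base ^+ n.+1 * (specnorm P * specnorm Gj * lk^-1)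
    = (base ^+ n * specnorm P) * (base * specnorm Gj) * lk^-1.
  by rewrite exprSr; ring.
apply: le_trans (ler_wpM2l (exprn_ge0 _ hb0) h1) _.
rewrite h2.
have h3 : (base ^+ n * specnorm P) * (base * specnorm Gj) * lk^-1 <=
   Qs a / Qs (a + n) * (lk * (Qs (a + n) / Qs (a + n).+1)) * lk^-1.
  rewrite ler_wpM2r //; apply: ler_pM; rewrite ?mulr_ge0 ?exprn_ge0 //.
apply: le_trans h3 _.
rewrite le_eqVlt; apply/orP; left; apply/eqP.
field; rewrite !gt_eqF //.
Qed.

End Core.

Section Cheb.
Variable R : realType.

Lemma sp_diag n (dd : 'rV[R]_n.+1) b :
  0 <= b -> (forall i, `|dd 0 i| <= b) -> specnorm (diag_mx dd) <= b.
Proof.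
move=> hb hd; apply: sp_le => x.
rewrite [vnorm (_ *m _)]vnormE -[b](ger0_norm hb) -sqrtr_sqr -sqrtrM ?sqr_ge0 //.
apply: ler_wsqrtr; rewrite /ss mulr_sumr; apply: ler_sum => i _.
rewrite mul_diag_mx mxE exprMn ler_wpM2r ?sqr_ge0 //.
rewrite -real_normK ?num_real // ler_pXn2r ?nnegrE ?normr_ge0 // (ger0_norm hb) //.
Qed.

Lemma cheb_rec (beta : R) (a : {poly R}) t :
  (cheb_pair beta a t.+2).1 = 'X * (cheb_pair beta a t.+1).1 - beta%:P * (cheb_pair beta a t).1.
Proof. by rewrite /=; case: (cheb_pair beta a t) => u v /=. Qed.

Lemma pq_rec (beta : R) (a : {poly R}) t (x : R) :
  (cheb_pair beta a t.+2).1.[x] = x * (cheb_pair beta a t.+1).1.[x] - beta * (cheb_pair beta a t).1.[x].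
Proof. by rewrite cheb_rec hornerD hornerN !hornerM hornerX hornerC. Qed.

Fixpoint rot (h w : R) (t : nat) : R * R :=
  match t with
  | 0 => (1, 0)
  | t'.+1 => let: (a, b) := rot h w t' in (h * a - w * b, w * a + h * b)
  end.

Lemma seq_bound (beta x : R) (u : nat -> R) :
  0 <= beta -> `|x| <= 2%:R * Num.sqrt beta ->
  u 0 = 1 -> u 1 = x / 2%:R ->
  (forall t, u t.+2 = x * u t.+1 - beta * u t) ->
  forall t, `|u t| <= Num.sqrt beta ^+ t.
Proof.
move=> hb hx u0 u1 urec.
set h := x / 2%:R.
have hw0 : 0 <= beta - h ^+ 2.
  have hh : `|h| <= Num.sqrt beta.
    rewrite /h normrM [`|2%:R^-1|]ger0_norm ?invr_ge0 ?ler0n //.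
    rewrite ler_pdivrMr ?ltr0n // mulrC; exact: hx.
  have e1 : h ^+ 2 = `|h| ^+ 2 by rewrite real_normK ?num_real.
  have e2 : Num.sqrt beta ^+ 2 = beta by rewrite sqr_sqrtr.
  rewrite subr_ge0 e1 -e2; have := normr_ge0 h; nra.
set w := Num.sqrt (beta - h ^+ 2).
have hw : w ^+ 2 = beta - h ^+ 2 by rewrite sqr_sqrtr.
have E : forall t, (rot h w t.+2).1 = x * (rot h w t.+1).1 - beta * (rot h w t).1.
  move=> s; rewrite /=; case: (rot h w s) => a b /=.
  have -> : beta = h ^+ 2 + w ^+ 2 by rewrite hw; ring.
  by rewrite /h; field; rewrite ?pnatr_eq0.
have N : forall t, ((rot h w t).1) ^+ 2 + ((rot h w t).2) ^+ 2 = beta ^+ t.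
  elim=> [|s IH] /=; first by rewrite expr1n expr0n /= addr0.
  move: IH; case: (rot h w s) => a b /= IH.
  rewrite [beta ^+ _.+1]exprS -IH -[beta](subrK (h ^+ 2)) -hw; ring.
have A : forall t, u t = (rot h w t).1 /\ u t.+1 = (rot h w t.+1).1.
  elim=> [|t [IH1 IH2]]; first by rewrite u0 u1 /= !mulr1 !mulr0 subr0.
  by split => //; rewrite urec E IH1 IH2.
move=> t; rewrite (proj1 (A t)).
rewrite -[_ ^+ t](ger0_norm (exprn_ge0 _ (sqrtr_ge0 _))).
rewrite -(ler_pXn2r (n:=2)) ?nnegrE ?normr_ge0 // !real_normK ?num_real //.
rewrite -exprM mulnC exprM sqr_sqrtr // -(N t) lerDl; exact: sqr_ge0.
Qed.

Lemma p_bound (beta x : R) t : 0 <= beta -> `|x| <= 2%:R * Num.sqrt beta ->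
  `|(p_poly beta t).[x]| <= Num.sqrt beta ^+ t.
Proof.
move=> hb hx; apply: (@seq_bound beta x (fun t => (p_poly beta t).[x])) => //.
- by rewrite /p_poly /= -polyC1 hornerC.
- by rewrite /p_poly /= hornerZ hornerX mulrC.
- by move=> s; rewrite /p_poly pq_rec.
Qed.

Lemma q_seq_bound (beta x : R) (p q : nat -> R) :
  0 <= beta -> `|x| <= 2%:R * Num.sqrt beta ->
  (forall t, p t.+2 = x * p t.+1 - beta * p t) ->
  (forall t, q t.+2 = x * q t.+1 - beta * q t) ->
  p 0 = 1 -> p 1 = x / 2%:R -> q 0 = 1 -> q 1 = x ->
  (forall t, `|p t| <= Num.sqrt beta ^+ t) ->
  forall t, `|q t| <= t.+1%:R * Num.sqrt beta ^+ t.
Proof.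
move=> hb hx prec qrec p0 p1 q0 q1 pb.
have D : forall t, q t.+2 = 2%:R * p t.+2 + beta * q t /\ q t.+3 = 2%:R * p t.+3 + beta * q t.+1.
  elim=> [|s [IH1 IH2]].
    split.
      by rewrite (qrec 0) q1 q0 (prec 0) p1 p0; field.
    by rewrite (qrec 1) (qrec 0) q1 q0 (prec 1) (prec 0) p1 p0; field.
  split => //.
  have hp2 : p s.+2 = (q s.+2 - beta * q s) / 2%:R by rewrite IH1; field.
  by rewrite (qrec s.+2) IH2 (prec s.+2) hp2 (qrec s); field.
have hs := sqrtr_ge0 beta.
have B : forall t, `|q t| <= t.+1%:R * Num.sqrt beta ^+ t /\
                   `|q t.+1| <= t.+2%:R * Num.sqrt beta ^+ t.+1.
  elim=> [|s [IH1 IH2]].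
    by rewrite q0 q1 normr1 mul1r expr0 lexx expr1.
  split => //.
  rewrite (proj1 (D s)); apply: le_trans (ler_normD _ _) _.
  rewrite !normrM ger0_norm ?ler0n // (ger0_norm hb).
  have hp := pb s.+2.
  have e1 : beta = Num.sqrt beta ^+ 2 by rewrite sqr_sqrtr.
  apply: le_trans (lerD (ler_wpM2l (ler0n _ 2) hp) (ler_wpM2l hb IH1)) _.
  rewrite {2}e1 le_eqVlt; apply/orP; left; apply/eqP.
  rewrite !exprS -!natr1; ring.
by move=> t; exact: (proj1 (B t)).
Qed.

Lemma q_bound (beta x : R) t : 0 <= beta -> `|x| <= 2%:R * Num.sqrt beta ->
  `|(q_poly beta t).[x]| <= t.+1%:R * Num.sqrt beta ^+ t.
Proof.
move=> hb hx.
apply: (@q_seq_bound beta x (fun t => (p_poly beta t).[x]) (fun t => (q_poly beta t).[x])) => //.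
- by move=> s; rewrite /p_poly pq_rec.
- by move=> s; rewrite /q_poly pq_rec.
- by rewrite /p_poly /= -polyC1 hornerC.
- by rewrite /p_poly /= hornerZ hornerX mulrC.
- by rewrite /q_poly /= -polyC1 hornerC.
- by rewrite /q_poly /= hornerX.
- by move=> s; apply: p_bound.
Qed.

End Cheb.

Section Scal.
Variable R : realType.

Lemma diag_lower n (dd : 'rV[R]_n.+1) m (x : 'cV[R]_n.+1) :
  0 <= m -> (forall i, m <= dd 0 i) -> m * vnorm x <= vnorm (diag_mx dd *m x).
Proof.
move=> hm hd.
rewrite [vnorm (_ *m _)]vnormE vnormE -[m](ger0_norm hm) -sqrtr_sqr -sqrtrM ?sqr_ge0 //.
apply: ler_wsqrtr; rewrite /ss mulr_sumr; apply: ler_sum => i _.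
rewrite mul_diag_mx mxE exprMn ler_wpM2r ?sqr_ge0 //.
have hdi := hd i; have hdi0 : 0 <= dd 0 i := le_trans hm hdi.
by rewrite ler_pXn2r ?nnegrE.
Qed.

Lemma Q_facts (rho z0 c1 : R) :
  0 < rho -> rho < 1 -> 0 < z0 -> z0 * rho < 1 ->
  z0 * (1 - rho) <= c1 * (1 - z0 * rho) -> 1 <= c1 ->
  let B := (z0 - 1) / (1 - z0 * rho) in
  [/\ forall j, 0 < 1 + B * rho ^+ j,
      (1 + B * rho ^+ 0) / (1 + B * rho ^+ 1) = z0 &
      forall a n, (1 + B * rho ^+ a) / (1 + B * rho ^+ (a + n)) <= c1].
Proof.
move=> r0 r1 z0p zr h3 hc1 B.
have d0 : 0 < 1 - z0 * rho by rewrite subr_gt0.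
have Bgt : -1 < B.
  rewrite /B ltr_pdivlMr //; nra.
have rj : forall j, 0 < rho ^+ j <= 1.
  by move=> j; rewrite exprn_gt0 //= exprn_ile1 // ltW.
have Qp : forall j, 0 < 1 + B * rho ^+ j.
  move=> j; have /andP [h1 h2] := rj j.
  set r := rho ^+ j in h1 h2 *.
  have [B0|B0] := leP 0 B; nra.
split => //.
  rewrite expr0 expr1 mulr1 /B.
  have r1' : 1 - rho != 0 by rewrite subr_eq0 eq_sym lt_eqF.
  field; apply/andP; split; apply: lt0r_neq0 => //; nra.
move=> a n.
have Qa := Qp a; have Qan := Qp (a + n).
rewrite ler_pdivrMr //.
have [B0|B0] := leP 0 B.
  have h1 : 1 + B * rho ^+ a <= 1 + B.
    by rewrite lerD2l ler_piMr // (andP (rj a)).2.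
  have h2 : 1 + B <= c1.
    have : B <= c1 - 1 by rewrite /B ler_pdivrMr //; nra.
    lra.
  have h4 : 1 <= 1 + B * rho ^+ (a + n) by rewrite lerDl mulr_ge0 // ltW // (andP (rj _)).1.
  apply: le_trans h1 _; apply: le_trans h2 _.
  by rewrite -{1}[c1]mulr1 ler_wpM2l // (le_trans _ hc1).
have h1 : 1 + B * rho ^+ a <= 1 + B * rho ^+ (a + n).
  rewrite lerD2l ler_nM2l // exprD ler_piMr //; [exact: ltW (andP (rj a)).1 | exact: (andP (rj n)).2].
apply: le_trans h1 _; rewrite -{1}[_ + _ * _]mul1r ler_wpM2r // ltW //.
Qed.

End Scal.

Section Scal2.
Variable R : realType.

Lemma scal_main (lk sg : R) : 0 < sg -> 2%:R * sg < lk ->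
  let c := (32%:R^-1 : R) in
  let s := Num.sqrt (lk ^+ 2 - 4%:R * sg ^+ 2) in
  let a := (lk + s) / 2%:R in
  let base := (1 - c) * a + c * sg in
  [/\ sg < base, base ^+ 2 + sg ^+ 2 <= (lk - c * (lk - 2%:R * sg)) * base,
      sg < lk / 2%:R - c * (lk - 2%:R * sg) &
      base ^+ 2 + (31%:R / 15%:R - 1) * sg ^+ 2 <=
        31%:R / 15%:R * (lk / 2%:R - c * (lk - 2%:R * sg)) * base].
Proof.
move=> sg0 hlk c s a base.
have hc : c = 32%:R^-1 by [].
have hD : 0 <= lk ^+ 2 - 4%:R * sg ^+ 2 by nra.
have hs0 : 0 <= s by apply: sqrtr_ge0.
have hs2 : s ^+ 2 = lk ^+ 2 - 4%:R * sg ^+ 2 by rewrite sqr_sqrtr.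
have ha : lk * a - a ^+ 2 - sg ^+ 2 = 0.
  have -> : lk * a - a ^+ 2 - sg ^+ 2 = (lk ^+ 2 - s ^+ 2 - 4%:R * sg ^+ 2) / 4%:R.
    by rewrite /a; field.
  by rewrite hs2; ring.
have ha2 : lk / 2%:R <= a by rewrite /a ler_pM2r ?invr_gt0 ?ltr0n // lerDl.
have hasg : sg < a by apply: lt_le_trans ha2; rewrite ltr_pdivlMr ?ltr0n // mulrC.
have c0 : 0 < c by rewrite hc invr_gt0 ltr0n.
have c1 : c < 1 by rewrite hc invf_lt1 ?ltr0n ?ltr1n.
have hb : sg < base.
  rewrite /base; nra.
have hb0 : 0 < base by apply: lt_trans hb.
have F1 : base ^+ 2 + sg ^+ 2 <= (lk - c * (lk - 2%:R * sg)) * base.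
  have id : a * ((lk - c * (lk - 2%:R * sg)) * base - base ^+ 2 - sg ^+ 2)
     = c * (1 - c) * sg * (a - sg) ^+ 2 + (1 - c) * base * (lk * a - a ^+ 2 - sg ^+ 2).
    by rewrite /base; ring.
  rewrite ha mulr0 addr0 in id.
  have : 0 <= a * ((lk - c * (lk - 2%:R * sg)) * base - base ^+ 2 - sg ^+ 2).
    rewrite id; apply: mulr_ge0; last exact: sqr_ge0.
    apply: mulr_ge0; last exact: ltW.
    by apply: mulr_ge0; [exact: ltW | rewrite subr_ge0; exact: ltW].
  rewrite pmulr_rge0; last exact: lt_trans hasg.
  by rewrite subr_ge0 lerBrDr addrC.
have P1 : sg < lk / 2%:R - c * (lk - 2%:R * sg).
  rewrite hc; lra.
split => //.
have e : 31%:R / 15%:R * (lk / 2%:R - c * (lk - 2%:R * sg)) =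
         (lk - c * (lk - 2%:R * sg)) + sg / 15%:R.
  by rewrite hc; field.
rewrite e.
have e2 : (31%:R / 15%:R - 1 : R) = 1 + 15%:R^-1 by field.
rewrite e2; nra.
Qed.

End Scal2.

Lemma scal_main2 (R : realType) (lk beta : R) : 0 < beta -> 2%:R * Num.sqrt beta < lk ->
  let c := (32%:R^-1 : R) in
  let a := (lk + Num.sqrt (lk ^+ 2 - 4%:R * beta)) / 2%:R in
  let base := (1 - c) * a + c * Num.sqrt beta in
  [/\ Num.sqrt beta < base,
      base ^+ 2 + beta <= (lk - c * (lk - 2%:R * Num.sqrt beta)) * base,
      Num.sqrt beta < lk / 2%:R - c * (lk - 2%:R * Num.sqrt beta) &
      base ^+ 2 + (31%:R / 15%:R - 1) * beta <=
        31%:R / 15%:R * (lk / 2%:R - c * (lk - 2%:R * Num.sqrt beta)) * base].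
Proof.
move=> hb hlk c a base.
have := @scal_main R lk (Num.sqrt beta) _ hlk; rewrite sqrtr_gt0 => /(_ hb).
by rewrite /= sqr_sqrtr // ltW.
Qed.

(* k = k'.+1 >= 1, d = k + m with m = m'.+1 >= 1, i.e. d > k >= 1 *)
Theorem lemma5 (R : realType) (k' m' : nat)
  (A : 'M[R]_(k'.+1 + m'.+1)) (lam : 'I_(k'.+1 + m'.+1) -> R)
  (U : 'M[R]_(k'.+1 + m'.+1))
  (beta eps : R) (X Xi : nat -> 'M[R]_(k'.+1 + m'.+1, k'.+1))
  (Rm : nat -> 'M[R]_k'.+1) :
  let lk := lam (lshift m'.+1 (@ord_max k')) in      (* lambda_k *)
  let lk1 := lam (rshift k'.+1 (@ord0 m')) in        (* lambda_{k+1} *)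
  let Uk := lsubmx U in                              (* U_k *)
  let Umk := rsubmx U in                             (* U_{-k} *)
  let c := 32%:R^-1 : R in
  0 < eps < 1 ->
  A^T = A ->
  U^T *m U = 1%:M ->
  A = U *m diag_mx (\row_i lam i) *m U^T ->
  (forall i j : 'I_(k'.+1 + m'.+1), (i <= j)%N -> lam j <= lam i) ->
  (forall i, 0 <= lam i) ->
  lk > lk1 ->
  0 < beta ->
  lk > 2%:R * Num.sqrt beta ->
  2%:R * Num.sqrt beta >= lk1 ->
  (X 0)^T *m X 0 = 1%:M ->
  cos_theta Uk (X 0) > 0 ->
  isQR ((2%:R)^-1 *: (A *m X 0) + Xi 0) (X 1%N) (Rm 1%N) ->
  (forall t, (1 <= t)%N ->
     isQR (A *m X t - beta *: (X t.-1 *m invmx (Rm t)) + Xi t) (X t.+1) (Rm t.+1)) ->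
  (forall t, specnorm (Umk^T *m Xi t) <= c * (lk - 2%:R * Num.sqrt beta) * eps) ->
  (forall t, specnorm (Uk^T *m Xi t)
               <= c * (lk - 2%:R * Num.sqrt beta) * cos_theta Uk (X t)) ->
  let c1 := 31%:R / 15%:R : R in
  let lkp := (lk + Num.sqrt (lk ^+ 2 - 4%:R * beta)) / 2%:R in
  let Lk := diag_mx (\row_(i < k'.+1) lam (lshift m'.+1 i)) in   (* Lambda_k *)
  let lamm := fun i : 'I_m'.+1 => lam (rshift k'.+1 i) in        (* Lambda_{-k} entries *)
  let C := C_mat beta Lk Uk Xi X in
  forall t, (1 <= t)%N ->
  [/\ specnorm (invmx (C t)) <= c1 / ((1 - c) * lkp + c * Num.sqrt beta) ^+ t,
      (forall s, (s < t)%N ->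
         specnorm (C (t - 1 - s)%N *m invmx (C t))
           <= c1 / ((1 - c) * lkp + c * Num.sqrt beta) ^+ s.+1),
      specnorm (poly_diag (p_poly beta t) lamm) <= Num.sqrt beta ^+ t &
      specnorm (poly_diag (q_poly beta t) lamm) <= t.+1%:R * Num.sqrt beta ^+ t].
Proof.
move=> lk lk1 Uk Umk c _ _ _ _ hmono hlam0 _ hbeta hlk2 hlk1 _ _ _ _ _ hXi2
  c1 lkp Lk lamm C t ht.
set sg := Num.sqrt beta.
set base := (1 - c) * lkp + c * sg.
have sg0 : 0 < sg by rewrite sqrtr_gt0.
have hb2 : sg ^+ 2 = beta by rewrite sqr_sqrtr // ltW.
have [hbs F1 P1 F3] : [/\ sg < base,
      base ^+ 2 + beta <= (lk - c * (lk - 2%:R * sg)) * base,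
      sg < lk / 2%:R - c * (lk - 2%:R * sg) &
      base ^+ 2 + (31%:R / 15%:R - 1) * beta <=
        31%:R / 15%:R * (lk / 2%:R - c * (lk - 2%:R * sg)) * base]
  := scal_main2 hbeta hlk2.
have hbase0 : 0 < base by apply: lt_trans hbs.
have hlk0 : 0 < lk by apply: lt_trans hlk2; rewrite mulr_gt0 ?ltr0n.
have hc : c = 32%:R^-1 by [].
have hdel : 0 < lk - 2%:R * sg by rewrite subr_gt0.
have hLkd : forall i, lk <= (\row_(i < k'.+1) lam (lshift m'.+1 i)) 0 i.
  by move=> i; rewrite mxE; apply: hmono => /=; exact: leq_ord.
have [HLu HLi] := lower_unit hlk0 (fun x => diag_lower x (ltW hlk0) hLkd).
set e := c * (lk - 2%:R * sg) / lk.
have HE : forall t, specnorm (E_mat Lk Uk Xi X t) <= e.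
  move=> s.
  set M := Uk^T *m X s; set N := Uk^T *m Xi s.
  have hN : specnorm N <= c * (lk - 2%:R * sg) * sigma_min M := hXi2 s.
  have key : specnorm N * specnorm (invmx M) <= c * (lk - 2%:R * sg).
    have cs0 : 0 <= sigma_min M by apply: sigma_ge0.
    have [csp|cs0'] := ltrP 0 (sigma_min M).
      have [_ hi] := lower_unit csp (fun x => sigma_lb M x).
      apply: le_trans (ler_pM (sp_ge0 _) (sp_ge0 _) hN hi) _.
      by rewrite mulfK // gt_eqF.
    have cse : sigma_min M = 0 by apply/eqP; rewrite eq_le cs0 cs0'.
    rewrite cse mulr0 in hN.
    have -> : specnorm N = 0 by apply/eqP; rewrite eq_le hN sp_ge0.
    by rewrite mul0r mulr_ge0 // ltW // hc invr_gt0 ltr0n.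
  rewrite /E_mat -/M -/N.
  apply: le_trans (spM _ _) _.
  apply: le_trans (ler_wpM2r (sp_ge0 _) (spM _ _)) _.
  apply: le_trans (ler_wpM2r (sp_ge0 _) (ler_wpM2r (sp_ge0 _) HLi)) _.
  by rewrite -mulrA /e mulrC ler_wpM2r // invr_ge0 ltW.
have He : e < 2%:R^-1.
  rewrite /e ltr_pdivrMr // hc; lra.
have hP1 : lk * (2%:R^-1 - e) = lk / 2%:R - c * (lk - 2%:R * sg).
  by rewrite /e; field; rewrite gt_eqF.
set P1v := lk / 2%:R - c * (lk - 2%:R * sg) in P1 F3 hP1.
have hP1v : 0 < P1v by apply: lt_trans P1.
set rho := beta / base ^+ 2.
set z0 := base / (lk * (2%:R^-1 - e)).
have rho0 : 0 < rho by rewrite divr_gt0 // exprn_gt0.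
have rho1 : rho < 1.
  rewrite /rho ltr_pdivrMr ?exprn_gt0 // mul1r -hb2.
  by rewrite ltr_pXn2r ?nnegrE ?ltW.
have z00 : 0 < z0 by rewrite /z0 hP1 divr_gt0.
have hzr : z0 * rho = beta / (P1v * base).
  by rewrite /z0 /rho hP1; field; rewrite !gt_eqF.
have zr1 : z0 * rho < 1.
  rewrite hzr ltr_pdivrMr ?mulr_gt0 // mul1r -hb2 expr2.
  by apply: ltr_pM; rewrite ?ltW.
have F3' : z0 * (1 - rho) <= c1 * (1 - z0 * rho).
  have k1 : z0 * (1 - rho) = (base ^+ 2 - beta) / (P1v * base).
    by rewrite /z0 /rho hP1; field; rewrite !gt_eqF.
  have k2 : c1 * (1 - z0 * rho) = c1 * (P1v * base - beta) / (P1v * base).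
    by rewrite hzr; field; rewrite !gt_eqF.
  rewrite k1 k2 ler_pM2r ?invr_gt0 ?mulr_gt0 //.
  move: F3; rewrite /c1; lra.
have hc1 : 1 <= c1 by rewrite /c1 ler_pdivlMr ?ltr0n // mul1r ler_nat.
have [QF1 QF2 QF3] := Q_facts rho0 rho1 z00 zr1 F3' hc1.
set B := (z0 - 1) / (1 - z0 * rho) in QF1 QF2 QF3.
have H0 : base / (2%:R^-1 - e) <= lk * (Qs rho B 0 / Qs rho B 1).
  rewrite /Qs QF2 /z0 le_eqVlt; apply/orP; left; apply/eqP.
  have h2e : 2%:R^-1 - e != 0 by rewrite subr_eq0 eq_sym lt_eqF.
  field; apply/andP; split; last by rewrite gt_eqF.
  by apply: lt0r_neq0; move: He; lra.
have HF1 : base + beta / base <= lk * (1 - e).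
  have -> : lk * (1 - e) = lk - c * (lk - 2%:R * sg) by rewrite /e; field; rewrite gt_eqF.
  rewrite -(ler_pM2r hbase0) mulrDl mulfVK ?gt_eqF // -expr2; exact: F1.
have CB := @C_bound R k' (k'.+1 + m'.+1) beta lk e base rho B Lk Uk Xi X
   hlk0 hbase0 (ltW hbeta) erefl HLu HLi HE He H0 QF1 HF1.
have fin : forall a n, specnorm (C a *m invmx (C (a + n)%N)) <= c1 / base ^+ n.
  move=> a n; rewrite ler_pdivlMr ?exprn_gt0 // mulrC.
  exact: le_trans (CB a n) (QF3 a n).
have hlamm : forall i, `|lamm i| <= 2%:R * sg.
  move=> i; rewrite ger0_norm ?hlam0 //; apply: le_trans hlk1.
  by apply: hmono => /=; rewrite leq_add2l.
split.
- have := fin 0%N t; rewrite add0n.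
  have -> : C 0%N = 1%:M by [].
  by rewrite mul1mx.
- move=> s hs; have := fin (t - 1 - s)%N s.+1.
  have -> : (t - 1 - s + s.+1 = t)%N.
    by rewrite -subnDA add1n subnK.
  by [].
- apply: sp_diag; first exact: exprn_ge0 (ltW sg0).
  move=> i; rewrite mxE; apply: p_bound; [exact: ltW | exact: hlamm].
- apply: sp_diag; first by rewrite mulr_ge0 ?ler0n ?exprn_ge0 ?ltW.
  move=> i; rewrite mxE; apply: q_bound; [exact: ltW | exact: hlamm].
Qed.
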